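(* Let $n\ge 1$. For $f\in L^1_{\mathrm{loc}}(\mathbb{R}^n)$ put \[\|f\|_{BMO^w}=\|mf\|_{\infty}+\|Mf\|_{\infty}\quad\text{and}\quad \|f\|^*_{BMO^w}=\|mf\|_{\infty}+2\sup_{x\in\mathbb{R}^n}\ \sup_{Q\ni x}\ \inf_{\alpha>0}\left|\frac{1}{\lambda(Q)}\int_Q [f(\xi)-\alpha]\,d\lambda(\xi)\right| .\] Then for every $f\in BMO^w$, \[\|f\|_{BMO^w}\le \|f\|^*_{BMO^w}\le 2\|f\|_{BMO^w}.\]
   Context: $\lambda$ is Lebesgue measure on $\mathbb{R}^n$; ''cube'' means a hypercube $Q\subseteq\mathbb{R}^n$, and $\sup_{Q\ni x}$ is over all cubes containing $x$. For $f\in L^1_{\mathrm{loc}}(\mathbb{R}^n)$ and a cube $Q$, $f_Q=\left|\frac{1}{\lambda(Q)}\int_Q f\,d\lambda\right|$ (absolute value of the average). Define $Mf(x)=\sup_{Q\ni x}\left|\frac{1}{\lambda(Q)}\int_Q[f(\xi)-f_Q]\,d\lambda(\xi)\right|$ and $mf(x)=\sup_{Q\ni x} f_Q$. The space of functions of weak bounded mean oscillation is $BMO^w=\{f\in L^1_{\mathrm{loc}}(\mathbb{R}^n): Mf\in L^\infty(\mathbb{R}^n)\}$. *)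

(* Defs.v *)
(* R^n is modelled as n.-tuple R with the product
   (Borel) sigma-algebra from mathcomp-analysis; Lebesgue measure is a measure
   mu on it characterised by its values on closed boxes. *)
From HB Require Import structures.
From mathcomp Require Import all_boot all_order all_algebra.
From mathcomp Require Import all_classical all_reals all_analysis.
From mathcomp Require Import ess_sup_inf measurable_realfun.
Set Implicit Arguments.
Unset Strict Implicit.
Unset Printing Implicit Defensive.
Import Order.TTheory GRing.Theory Num.Theory.
Import numFieldNormedType.Exports.
Local Open Scope classical_set_scope.
Local Open Scope ring_scope.

Section BMOw.
Context {R : realType} {n : nat}.
Variable mu : {measure set (n.-tuple R) -> \bar R}.

Definition box (a b : n.-tuple R) : set (n.-tuple R) :=
  [set y | forall i : 'I_n, tnth a i <= tnth y i <= tnth b i].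

Definition cube (a : n.-tuple R) (l : R) : set (n.-tuple R) :=
  [set y | forall i : 'I_n, tnth a i <= tnth y i <= tnth a i + l].

Definition is_cube (Q : set (n.-tuple R)) : Prop :=
  exists a l, 0 < l /\ Q = cube a l.

Definition avg (Q : set (n.-tuple R)) (g : n.-tuple R -> R) : R :=
  fine (\int[mu]_(y in Q) (g y)%:E) / fine (mu Q).

Definition fQ (f : n.-tuple R -> R) (Q : set (n.-tuple R)) : R := `|avg Q f|.

Definition Mf (f : n.-tuple R -> R) (x : n.-tuple R) : \bar R :=
  ereal_sup [set (`|avg Q (fun xi => f xi - fQ f Q)|)%:E
            | Q in [set Q | is_cube Q /\ Q x]].

Definition mf (f : n.-tuple R -> R) (x : n.-tuple R) : \bar R :=
  ereal_sup [set (fQ f Q)%:E | Q in [set Q | is_cube Q /\ Q x]].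

Definition locally_integrable (f : n.-tuple R -> R) : Prop :=
  forall Q, is_cube Q -> mu.-integrable Q (EFin \o f).

Definition Linf_norm (g : n.-tuple R -> \bar R) : \bar R :=
  ess_sup mu (fun x => `|g x|%E).

Definition in_Linf (g : n.-tuple R -> \bar R) : Prop :=
  measurable_fun [set: n.-tuple R] g /\ (Linf_norm g < +oo)%E.

Definition BMOw (f : n.-tuple R -> R) : Prop :=
  locally_integrable f /\ in_Linf (Mf f).

Definition BMOw_norm (f : n.-tuple R -> R) : \bar R :=
  (Linf_norm (mf f) + Linf_norm (Mf f))%E.

Definition sup_inf_term (f : n.-tuple R -> R) : \bar R :=
  ereal_sup (range (fun x : n.-tuple R =>
    ereal_sup [set ereal_inf [set (`|avg Q (fun xi => f xi - alpha)|)%:E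
                             | alpha in [set alpha : R | 0 < alpha]]
              | Q in [set Q | is_cube Q /\ Q x]])).

Definition BMOw_norm_star (f : n.-tuple R -> R) : \bar R :=
  (Linf_norm (mf f) + 2%:E * sup_inf_term f)%E.

End BMOw.

(* Main.v *)
Require Import Defs.
From HB Require Import structures.
From mathcomp Require Import all_boot all_order all_algebra.
From mathcomp Require Import all_classical all_reals all_analysis.
From mathcomp Require Import ess_sup_inf measurable_realfun.
From mathcomp.algebra_tactics Require Import ring lra.
Import Order.TTheory GRing.Theory Num.Theory.
Import numFieldNormedType.Exports.
Local Open Scope classical_set_scope.
Local Open Scope ring_scope.

Section P.
Context {R : realType} {n : nat} (mu : {measure set (n.-tuple R) -> \bar R}).
Hypothesis hmu : forall a b : n.-tuple R, (forall i, tnth a i <= tnth b i) ->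
     mu (box a b) = (\prod_(i < n) (tnth b i - tnth a i))%:E.

Lemma cube_box (a : n.-tuple R) l : cube a l = box a [tuple tnth a i + l | i < n].
Proof.
by apply/seteqP; split => y /= H i; rewrite ?tnth_mktuple; have := H i; rewrite ?tnth_mktuple.
Qed.

Lemma mu_cube a l : 0 < l -> mu (cube a l) = (l ^+ n)%:E.
Proof.
move=> l0; rewrite cube_box hmu; last by move=> i; rewrite tnth_mktuple lerDl ltW.
congr EFin; under eq_bigr => i _ do rewrite tnth_mktuple (addrC (tnth a i)) addrK.
by rewrite prodr_const card_ord.
Qed.

Lemma box_meas (a b : n.-tuple R) : measurable (box a b).
Proof.
have -> : box a b = \bigcap_(i in [set: 'I_n])
   ((@tnth n R)^~ i @^-1` `[tnth a i, tnth b i]).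
  apply/seteqP; split => y /=.
    by move=> H i _ /=; rewrite in_itv /=; exact: H.
  by move=> H i; have := H i I; rewrite /= in_itv.
apply: fin_bigcap_measurable; first exact: finite_finset.
move=> i _; rewrite -[X in measurable X]setTI.
by apply: measurable_tnth => //; exact: measurable_itv.
Qed.

Lemma cube_meas {Q : set (n.-tuple R)} : is_cube Q -> measurable Q.
Proof. by move=> [a [l [_ ->]]]; rewrite cube_box; exact: box_meas. Qed.

Lemma cube_mu {Q : set (n.-tuple R)} : is_cube Q -> exists m, 0 < m /\ mu Q = m%:E.
Proof. by move=> [a [l [l0 ->]]]; exists (l ^+ n); rewrite mu_cube // exprn_gt0. Qed.

Variable f : n.-tuple R -> R.
Hypothesis hloc : Defs.locally_integrable mu f.

Lemma avg_sub (Q : set (n.-tuple R)) c : is_cube Q ->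
  avg mu Q (fun xi => f xi - c) = avg mu Q f - c.
Proof.
move=> hQ; have mQ := cube_meas hQ; have [m [m0 muQ]] := cube_mu hQ.
have ic : mu.-integrable Q (EFin \o cst c).
  apply/integrableP; split; first exact/measurable_EFinP/measurable_cst.
  rewrite (_ : (fun x => _) = cst `|c%:E|%E) // integral_cst // muQ.
  by rewrite /= -EFinM ltry.
rewrite /avg muQ /=.
under eq_integral do rewrite EFinB.
rewrite (integralB_EFin mQ (hloc _ hQ) ic).
have -> : (\int[mu]_(x in Q) (cst c x)%:E = (c * m)%:E)%E.
  transitivity (\int[mu]_(x in Q) (cst c%:E) x)%E; first by [].
  by rewrite integral_cst // muQ.
rewrite -(fineK (integrable_fin_num mQ (hloc _ hQ))) -EFinB /=.
field; exact: lt0r_neq0.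
Qed.


Lemma D_eq (Q : set (n.-tuple R)) : is_cube Q ->
  `|avg mu Q (fun xi => f xi - fQ mu f Q)| = `|avg mu Q f| - avg mu Q f.
Proof.
move=> hQ; rewrite avg_sub // /fQ; set A := avg mu Q f.
case: (lerP 0 A) => h; first by rewrite (ger0_norm h) subrr normr0.
by rewrite (ltr0_norm h) ltr0_norm; lra.
Qed.

Lemma I_eq (Q : set (n.-tuple R)) : is_cube Q ->
  ereal_inf [set (`|avg mu Q (fun xi => f xi - alpha)|)%:E
            | alpha in [set alpha : R | 0 < alpha]] =
  ((`|avg mu Q f| - avg mu Q f) / 2)%:E.
Proof.
move=> hQ.
rewrite (_ : [set _ | alpha in _] = [set (`|avg mu Q f - alpha|)%:E
            | alpha in [set alpha : R | 0 < alpha]]); last first.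
  by apply: eq_imagel => al _; rewrite avg_sub.
set A := avg mu Q f.
apply/eqP; rewrite eq_le; apply/andP; split.
  case: (ltrP 0 A) => h.
    have : [set (`|A - alpha|)%:E | alpha in [set alpha : R | 0 < alpha]] (`|A - A|)%:E.
      by exists A.
    move/ereal_inf_lbound => /le_trans; apply.
    by rewrite subrr normr0 (gtr0_norm h) subrr mul0r.
  apply/lee_addgt0Pr => e e0.
  have : [set (`|A - alpha|)%:E | alpha in [set alpha : R | 0 < alpha]] (`|A - e|)%:E.
    by exists e.
  move/ereal_inf_lbound => /le_trans; apply.
  rewrite -EFinD lee_fin (ler0_norm h) ler0_norm; lra.
apply/ereal_infP => _ [al /= al0 <-]; rewrite lee_fin.
case: (lerP 0 A) => h.
  by rewrite (ger0_norm h) subrr mul0r.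
rewrite (ltr0_norm h) ltr0_norm; lra.
Qed.


Local Open Scope ereal_scope.

Lemma inner_eq x :
  2%:E * ereal_sup [set ereal_inf [set (`|avg mu Q (fun xi => f xi - alpha)|)%:E
                             | alpha in [set alpha : R | (0 < alpha)%R]]
              | Q in [set Q | is_cube Q /\ Q x]] = Mf mu f x.
Proof.
rewrite -ereal_sup_pZl // image_comp; congr ereal_sup; apply: eq_imagel => Q [hQ _].
rewrite /= I_eq // D_eq // -EFinM; congr EFin; field.
by [].
Qed.

Lemma sup_eq : 2%:E * sup_inf_term mu f = ereal_sup (range (Mf mu f)).
Proof.
rewrite /sup_inf_term -ereal_sup_pZl // image_comp; congr ereal_sup.
by apply: eq_imagel => x _; exact: inner_eq.
Qed.

Lemma cube_self (x : n.-tuple R) : is_cube (cube x 1) /\ cube x 1 x.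
Proof.
split; first by exists x, 1%R; split.
by move=> i; rewrite lexx /= lerDl ler01.
Qed.

Lemma Mf_ge0 x : 0 <= Mf mu f x.
Proof.
have : [set (`|avg mu Q (fun xi => f xi - fQ mu f Q)|)%:E
            | Q in [set Q | is_cube Q /\ Q x]]
         (`|avg mu (cube x 1) (fun xi => f xi - fQ mu f (cube x 1))|)%:E.
  by exists (cube x 1) => //; exact: cube_self.
move/ereal_sup_ubound => /(le_trans _); apply; by rewrite lee_fin normr_ge0.
Qed.


Lemma ess_eq : Linf_norm mu (Mf mu f) = ereal_sup (range (Mf mu f)).
Proof.
apply/eqP; rewrite eq_le; apply/andP; split.
  apply/ess_supP; apply: nearW => x /=; rewrite gee0_abs ?Mf_ge0 //.
  by apply: ereal_sup_ubound; exists x.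
apply: ge_ereal_sup => _ [x _ <-]; apply: ge_ereal_sup => _ [Q [hQ Qx] <-].
rewrite leNgt; apply/negP => hlt.
have [N [mN muN0 sub]] := ess_sup_ge mu (fun x => `|Mf mu f x|).
have QN : Q `<=` N.
  move=> y Qy; apply: sub => /= hle.
  have : (`|avg mu Q (fun xi => f xi - fQ mu f Q)|)%:E <= Mf mu f y.
    by apply: ereal_sup_ubound; exists Q.
  rewrite -(gee0_abs (Mf_ge0 y)) => /le_trans /(_ hle).
  by rewrite leNgt hlt.
have [m [m0 hm]] := cube_mu hQ.
have h : mu Q <= mu N by exact: (le_measure mu (mem_set (cube_meas hQ)) (mem_set mN) QN).
by move: h; rewrite hm muN0 lee_fin leNgt m0.
Qed.

End P.

Theorem proposition2 (R : realType) (n : nat)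
  (mu : {measure set (n.-tuple R) -> \bar R})
  (hmu : forall a b : n.-tuple R, (forall i, tnth a i <= tnth b i) ->
     mu (box a b) = (\prod_(i < n) (tnth b i - tnth a i))%:E)
  (hn : (0 < n)%N) (f : n.-tuple R -> R) (hf : BMOw mu f) :
  (BMOw_norm mu f <= BMOw_norm_star mu f <= 2%:E * BMOw_norm mu f)%E.
Proof.
move: hf => [hloc _].
rewrite /BMOw_norm /BMOw_norm_star (@sup_eq _ _ mu hmu f hloc) -(@ess_eq _ _ mu hmu f).
apply/andP; split; first by [].
set L := Linf_norm mu (mf mu f); set E := Linf_norm mu (Mf mu f).
have x0 : n.-tuple R := [tuple 0%R | i < n].
have muT : (0 < mu [set: n.-tuple R])%E.
  have [m [m0 hm]] := @cube_mu _ _ mu hmu _ (cube_self x0).1.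
  have h : (mu (cube x0 1) <= mu [set: n.-tuple R])%E.
    exact: (le_measure mu (mem_set (cube_meas (cube_self x0).1))
     (mem_set measurableT) (@subsetT _ (cube x0 1))).
  by apply: lt_le_trans h; rewrite hm lte_fin.
have L0 : (0 <= L)%E.
  apply: (ess_sup_gee muT); apply: nearW => x; exact: abse_ge0.
have E0 : (0 <= E)%E.
  apply: (ess_sup_gee muT); apply: nearW => x; exact: abse_ge0.
apply: (lee_pemull (adde_ge0 L0 E0)).
by rewrite lee_fin ler1n.
Qed.
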